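(* Let $\epsilon,r>0$. Then there exist a sponsored search setting (numbers of agents $n$ and slots $k\le n$), $\alpha\in\mathbb{R}^n_{>}$ and $\theta\in\Theta^\alpha$ such that $R(\theta)\ge r$ and $\alpha$-VCG has a Nash equilibrium (for $\theta$) with revenue at most $\epsilon$. Similarly, there exist such a setting, $\alpha\in\mathbb{R}^n_{>}$ and $\theta\in\Theta^\alpha$ such that $R(\theta)\ge r$ and $\alpha$-GSP has a Nash equilibrium (for $\theta$) with revenue at most $\epsilon$.
   Context: Sponsored search setting: a set $N=\{1,\dots,n\}$ of agents and $k\le n$ slots. An outcome assigns the agents to distinct positions in $\{1,\dots,n\}$; position $j\le k$ means receiving slot $j$, positions $>k$ mean receiving nothing (value $0$). Utilities are quasilinear. $\mathbb{R}^n_{>}$ is the set of vectors $\alpha$ with $1=\alpha_1>\alpha_2>\dots>\alpha_k>0$ and $\alpha_j=0$ for $j>k$ (set $\alpha_{n+1}=0$). For $\alpha\in\mathbb{R}^n_{>}$, $\Theta^\alpha$ is the set of type profiles in which each agent $i$ has a value $v_i(\theta_i)\ge0$ and values slot $j$ at $\alpha_j v_i(\theta_i)$. VCG: agents report bids $x_{i,j}$ for each slot; an assignment maximizing total bid is chosen and each agent pays the Clarke payment. The VCG outcome for $\theta$ is the result of VCG under truthful bids $x_{i,j}=$ true value of $i$ for slot $j$; $R(\theta)$ is its revenue (sum of payments). $\alpha$-GSP and $\alpha$-VCG: each agent submits a single $b_i\ge 0$, interpreted as bid $\alpha_j b_i$ on slot $j$. Agents are ranked by $b_i$ (ties arbitrary);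 the agent of rank $j\le k$ gets slot $j$. Writing $b_{(l)}$ for the $l$-th highest submitted value ($0$ if $l>n$): in $\alpha$-GSP the rank-$j$ agent pays $\alpha_j b_{(j+1)}$; in $\alpha$-VCG (the VCG mechanism applied to these bid vectors) it pays $\sum_{l=j}^{k}(\alpha_l-\alpha_{l+1})b_{(l+1)}$. Revenue is the sum of payments. A Nash equilibrium (for a given type profile, complete information) is a profile of submitted numbers from which no agent can strictly gain by unilaterally changing its number. *)

(* Defs.v *)
From HB Require Import structures.
From mathcomp Require Import all_boot all_order all_algebra all_fingroup.
From mathcomp Require Import reals.
Set Implicit Arguments. Unset Strict Implicit. Unset Printing Implicit Defensive.
Import Order.TTheory GRing.Theory Num.Theory.
Local Open Scope ring_scope.

(* Conventions: agents are 'I_n; positions are 0-based ranks 0..n-1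
   (0-based position p = paper's position p+1).  alpha p = paper's alpha_{p+1};
   alpha p = 0 for p >= k (so alpha_{n+1} = 0 as well). *)

Definition alpha_ok (R : realType) (n k : nat) (alpha : nat -> R) : Prop :=
  [/\ (0 < k <= n)%N,
      alpha 0%N = 1,
      (forall p : nat, (p.+1 < k)%N -> alpha p.+1 < alpha p),
      0 < alpha k.-1
    & (forall p : nat, (k <= p)%N -> alpha p = 0)].

(* theta \in Theta^alpha: nonnegative values v_i; agent i values position p
   at alpha p * v i. *)
Definition types_ok (R : realType) (n : nat) (v : 'I_n -> R) : Prop :=
  forall i, 0 <= v i.

Definition welfare (R : realType) (n : nat) (alpha : nat -> R) (v : 'I_n -> R)
  (s : {perm 'I_n}) : R := \sum_(i : 'I_n) alpha (s i) * v i.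

Definition welfare_without (R : realType) (n : nat) (alpha : nat -> R)
  (v : 'I_n -> R) (i : 'I_n) (s : {perm 'I_n}) : R :=
  \sum_(j : 'I_n | j != i) alpha (s j) * v j.

(* maximal welfare of the other agents when i is absent (all summands >= 0,
   so 0 is a harmless neutral element for max) *)
Definition opt_welfare_without (R : realType) (n : nat) (alpha : nat -> R)
  (v : 'I_n -> R) (i : 'I_n) : R :=
  \big[Num.max/0]_(s : {perm 'I_n}) welfare_without alpha v i s.

Definition vcg_optimal (R : realType) (n : nat) (alpha : nat -> R)
  (v : 'I_n -> R) (s : {perm 'I_n}) : Prop :=
  forall t : {perm 'I_n}, welfare alpha v t <= welfare alpha v s.

Definition clarke_payment (R : realType) (n : nat) (alpha : nat -> R)
  (v : 'I_n -> R) (s : {perm 'I_n}) (i : 'I_n) : R :=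
  opt_welfare_without alpha v i - welfare_without alpha v i s.

Definition vcg_revenue (R : realType) (n : nat) (alpha : nat -> R)
  (v : 'I_n -> R) (s : {perm 'I_n}) : R :=
  \sum_(i : 'I_n) clarke_payment alpha v s i.

Definition consistent_ranking (R : realType) (n : nat) (b : 'I_n -> R)
  (rho : {perm 'I_n}) : Prop :=
  forall i j : 'I_n, b j < b i -> (rho i < rho j)%N.

(* b_(m+1): the (m+1)-th highest submitted number (0-based m), 0 if m >= n *)
Definition nth_bid (R : realType) (n : nat) (b : 'I_n -> R)
  (rho : {perm 'I_n}) (m : nat) : R :=
  oapp (fun p : 'I_n => b ((rho^-1)%g p)) 0 (insub m).

(* alpha-GSP: rank (p+1) agent pays alpha_{p+1} b_(p+2) (0 when p >= k) *)
Definition gsp_pay (R : realType) (n k : nat) (alpha : nat -> R)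
  (b : 'I_n -> R) (rho : {perm 'I_n}) (i : 'I_n) : R :=
  alpha (rho i) * nth_bid b rho (rho i).+1.

(* alpha-VCG: rank j=p+1 agent pays sum_{l=j}^{k} (alpha_l - alpha_{l+1}) b_(l+1) *)
Definition avcg_pay (R : realType) (n k : nat) (alpha : nat -> R)
  (b : 'I_n -> R) (rho : {perm 'I_n}) (i : 'I_n) : R :=
  \sum_(rho i <= l < k) (alpha l - alpha l.+1) * nth_bid b rho l.+1.

Definition utility (R : realType) (n : nat) (alpha : nat -> R) (v : 'I_n -> R)
  (pay : ('I_n -> R) -> {perm 'I_n} -> 'I_n -> R)
  (b : 'I_n -> R) (rho : {perm 'I_n}) (i : 'I_n) : R :=
  alpha (rho i) * v i - pay b rho i.

Definition mech_revenue (R : realType) (n : nat)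
  (pay : ('I_n -> R) -> {perm 'I_n} -> 'I_n -> R)
  (b : 'I_n -> R) (rho : {perm 'I_n}) : R :=
  \sum_(i : 'I_n) pay b rho i.

Definition deviate (R : realType) (n : nat) (b : 'I_n -> R) (i : 'I_n) (x : R)
  : 'I_n -> R := fun j => if j == i then x else b j.

(* Nash equilibrium, valid for every (arbitrary) tie-breaking rule:
   for any ranking consistent with b and any ranking consistent with a
   unilateral deviation, the deviating agent does not strictly gain. *)
Definition is_nash (R : realType) (n : nat) (alpha : nat -> R) (v : 'I_n -> R)
  (pay : ('I_n -> R) -> {perm 'I_n} -> 'I_n -> R) (b : 'I_n -> R) : Prop :=
  (forall i, 0 <= b i) /\
  forall rho : {perm 'I_n}, consistent_ranking b rho ->
  forall (i : 'I_n) (x : R), 0 <= x -> x != b i ->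
  forall rho' : {perm 'I_n}, consistent_ranking (deviate b i x) rho' ->
    utility alpha v pay (deviate b i x) rho' i <= utility alpha v pay b rho i.

(* Main.v *)
Require Import Defs.
From HB Require Import structures.
From mathcomp Require Import all_boot all_order all_algebra all_fingroup.
From mathcomp Require Import reals zify.
Import Order.TTheory GRing.Theory Num.Theory.
Local Open Scope ring_scope.

Section Aux.
Variable R : realType.

Definition al : nat -> R := fun p => if p == 0%N then 1 else 0.
Definition o0 : 'I_2 := ord0.
Definition o1 : 'I_2 := @Ordinal 2 1 isT.

Lemma al_ge0 p : 0 <= al p.
Proof. by rewrite /al; case: eqP. Qed.
Lemma al_le1 p : al p <= 1.
Proof. by rewrite /al; case: eqP. Qed.

Lemma al_ok : alpha_ok 2 1 al.
Proof.
split.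
- by [].
- by [].
- by move=> p.
- by rewrite /al /= ltr01.
- by move=> p; rewrite /al; case: p.
Qed.

Lemma I2_cases (i : 'I_2) : i = o0 \/ i = o1.
Proof. case: i => [[|[|m]] Hi]; [left|right|] ; try exact: val_inj. by []. Qed.

Lemma sum_al (s : {perm 'I_2}) : \sum_(i : 'I_2) al (s i) = 1.
Proof.
rewrite (reindex_inj (@perm_inj _ (s^-1)%g)) /=.
under eq_bigr do rewrite permKV.
by rewrite big_ord_recr big_ord1 /al /= addr0.
Qed.

Lemma welf (r : R) (s : {perm 'I_2}) : welfare al (fun _ => r) s = r.
Proof. by rewrite /welfare -big_distrl /= sum_al mul1r. Qed.

Lemma welf_wo (r : R) i (s : {perm 'I_2}) :
  welfare_without al (fun _ => r) i s = r - al (s i) * r.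
Proof.
rewrite -{2}(welf r s) /welfare (bigD1 i) //=.
by rewrite /welfare_without addrC addrK.
Qed.

Lemma opt_wo (r : R) (i : 'I_2) : 0 <= r -> opt_welfare_without al (fun _ => r) i = r.
Proof.
move=> r0; apply/eqP; rewrite eq_le; apply/andP; split.
  apply/bigmax_leP; split => // s _.
  rewrite welf_wo lerBlDr lerDl; apply: mulr_ge0 => //; exact: al_ge0.
have := le_bigmax 0 (fun s => welfare_without al (fun _ => r) i s) (tperm i o1).
by rewrite welf_wo tpermL /al /= mul0r subr0.
Qed.

Lemma nth1 (c : 'I_2 -> R) (rho : {perm 'I_2}) :
  nth_bid c rho 1 = c ((rho^-1)%g o1).
Proof.
rewrite /nth_bid insubT //= => H; congr (c ((rho^-1)%g _)); exact: val_inj.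
Qed.

Lemma nth2 (c : 'I_2 -> R) (rho : {perm 'I_2}) :
  nth_bid c rho 2 = 0.
Proof. by rewrite /nth_bid insubF. Qed.

Lemma inv_at (rho : {perm 'I_2}) (j k : 'I_2) : rho j = k -> (rho^-1)%g k = j.
Proof. by move=> <-; rewrite permK. Qed.

Definition bb (r : R) : 'I_2 -> R := fun i => if i == o0 then r else 0.

Lemma cons_b (r : R) rho : 0 < r -> consistent_ranking (bb r) rho ->
  rho o0 = o0 /\ rho o1 = o1.
Proof.
move=> r0 /(_ o0 o1); rewrite /bb /= r0 => /(_ isT) H.
have := ltn_ord (rho o1).
split; apply: val_inj => /=; lia.
Qed.

Variable pay : ('I_2 -> R) -> {perm 'I_2} -> 'I_2 -> R.
Hypothesis payE : forall c rho i, pay c rho i = al (rho i) * nth_bid c rho (rho i).+1.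

Lemma util_cases (r : R) (c : 'I_2 -> R) (rho : {perm 'I_2}) (i : 'I_2) :
  (rho i = o0 /\ utility al (fun _ => r) pay c rho i
     = r - c ((rho^-1)%g o1)) \/
  (utility al (fun _ => r) pay c rho i = 0).
Proof.
rewrite /utility payE.
case: (I2_cases (rho i)) => ->; [left|right].
  by split => //; rewrite nth1 /al /= !mul1r.
by rewrite /al /= !mul0r subr0.
Qed.

Lemma nash_b (r : R) : 0 < r -> is_nash al (fun _ => r) pay (bb r).
Proof.
move=> r0; split.
  by move=> i; rewrite /bb; case: eqP => // _; exact: ltW.
move=> rho /(cons_b _ _ r0) [h0 h1] i x x0 _ rho' _.
have Hrho : forall j, (rho^-1)%g (rho j) = j by move=> j; rewrite permK.
case: (I2_cases i) => ->.
-
  have -> : utility al (fun _ => r) pay (bb r) rho o0 = r.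
    by rewrite /utility payE h0 /= nth1 (inv_at _ _ _ h1) /bb /al /= !mul1r subr0.
  case: (util_cases r (deviate (bb r) o0 x) rho' o0) => [[h ->]|->]; last exact: ltW.
  have : (rho'^-1)%g o1 = o1.
    case: (I2_cases ((rho'^-1)%g o1)) => // e.
    have := f_equal rho' e; rewrite permKV h => /(congr1 val) //.
  move=> ->; rewrite /deviate /bb /= subr0 //.
- case: (util_cases r (bb r) rho o1) => [[h _]|->]; first by rewrite h1 in h.
  case: (util_cases r (deviate (bb r) o1 x) rho' o1) => [[h ->]|->] //.
  have : (rho'^-1)%g o1 = o0.
    case: (I2_cases ((rho'^-1)%g o1)) => // e.
    have := f_equal rho' e; rewrite permKV h => /(congr1 val) //.
  by move=> ->; rewrite /deviate /bb /= subrr.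
Qed.

Lemma rev_b (r eps : R) : 0 < r -> 0 < eps -> forall rho,
  consistent_ranking (bb r) rho -> mech_revenue pay (bb r) rho <= eps.
Proof.
move=> r0 e0 rho /(cons_b _ _ r0) [h0 h1].
rewrite /mech_revenue big_ord_recr big_ord1 /= !payE.
have -> : (widen_ord (m:=2) (leqnSn 1) ord0 : 'I_2) = o0 by exact: val_inj.
have -> : (ord_max : 'I_2) = o1 by exact: val_inj.
rewrite h0 h1 /= nth1 nth2 (inv_at _ _ _ h1) /bb /= /al /= mulr0 mul0r addr0.
exact: ltW.
Qed.

End Aux.

Lemma vcg_rev (R : realType) (r : R) : 0 < r ->
  forall s : {perm 'I_2}, vcg_optimal (al R) (fun _ => r) s ->
    r <= vcg_revenue (al R) (fun _ => r) s.
Proof.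
move=> r0 s _; rewrite /vcg_revenue /clarke_payment.
under eq_bigr => i _ do rewrite opt_wo ?(ltW r0) // welf_wo opprB addrC subrK.
by rewrite -big_distrl /= sum_al mul1r.
Qed.

Theorem theorem1 (R : realType) (eps r : R) :
  0 < eps -> 0 < r ->
  (exists (n k : nat) (alpha : nat -> R) (v : 'I_n -> R),
     [/\ alpha_ok n k alpha, types_ok v,
         (forall s : {perm 'I_n}, vcg_optimal alpha v s -> r <= vcg_revenue alpha v s)
       & exists b : 'I_n -> R,
           is_nash alpha v (avcg_pay k alpha) b /\
           (forall rho : {perm 'I_n}, consistent_ranking b rho ->
              mech_revenue (avcg_pay k alpha) b rho <= eps)])
  /\
  (exists (n k : nat) (alpha : nat -> R) (v : 'I_n -> R),
     [/\ alpha_ok n k alpha, types_ok v,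
         (forall s : {perm 'I_n}, vcg_optimal alpha v s -> r <= vcg_revenue alpha v s)
       & exists b : 'I_n -> R,
           is_nash alpha v (gsp_pay k alpha) b /\
           (forall rho : {perm 'I_n}, consistent_ranking b rho ->
              mech_revenue (gsp_pay k alpha) b rho <= eps)]).
Proof.
move=> e0 r0.
have tok : types_ok (fun _ : 'I_2 => r) by move=> i; exact: ltW.
have avE : forall (c : 'I_2 -> R) (rho : {perm 'I_2}) (i : 'I_2), avcg_pay 1 (al R) c rho i =
   al R (rho i) * nth_bid c rho (rho i).+1.
  move=> c rho i; rewrite /avcg_pay.
  case: (I2_cases (rho i)) => ->.
    by rewrite big_nat1 /al /= subr0.
  by rewrite big_geq // /al /= mul0r.
have gE : forall (c : 'I_2 -> R) (rho : {perm 'I_2}) (i : 'I_2), gsp_pay 1 (al R) c rho i =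
   al R (rho i) * nth_bid c rho (rho i).+1 by [].
split; exists 2%N, 1%N, (al R), (fun _ => r); split.
- exact: al_ok.
- exact: tok.
- exact: vcg_rev.
- exists (bb R r); split; [exact: (@nash_b R _ avE r r0) | exact: (@rev_b R _ avE r eps r0 e0)].
- exact: al_ok.
- exact: tok.
- exact: vcg_rev.
- exists (bb R r); split; [exact: (@nash_b R _ gE r r0) | exact: (@rev_b R _ gE r eps r0 e0)].
Qed.
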